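(* Let $P,Q\in\mathbb P_d$ and $R=\big((1-t)P+tQ\big)^{-1}$ for some $t\in[0,1]$. Then $\operatorname{F}_R(P,Q)=\operatorname{F}^{\mathrm M}(P,Q)$.
   Context: $\mathbb P_d$ is the set of $d\times d$ complex positive definite matrices; $A\#B:=A^{1/2}(A^{-1/2}BA^{-1/2})^{1/2}A^{1/2}$. The generalized fidelity is $\operatorname{F}_R(P,Q):=\operatorname{Tr}\big[\sqrt{R^{1/2}PR^{1/2}}\,R^{-1}\sqrt{R^{1/2}QR^{1/2}}\big]$, and the Matsumoto fidelity is $\operatorname{F}^{\mathrm M}(P,Q):=\operatorname{Tr}[P\#Q]$. *)

(* Defs.v *)
From Stdlib Require Import ClassicalEpsilon.
From mathcomp Require Import all_boot all_order all_algebra.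
From mathcomp Require Import reals complex.
Set Implicit Arguments. Unset Strict Implicit. Unset Printing Implicit Defensive.
Import GRing.Theory Num.Theory.
Local Open Scope ring_scope.

Section MatrixDefs.
Variables (R : realType) (d : nat).
Local Notation C := (R[i]).
Local Notation M := ('M[C]_d).

Definition adjmx (A : 'M[C]_(d, d)) : M := (map_mx Num.conj A)^T.
Definition cadj (v : 'cV[C]_d) : 'rV[C]_d := (map_mx Num.conj v)^T.

Definition hermitian (A : M) : Prop := adjmx A = A.

Definition psd (A : M) : Prop :=
  hermitian A /\ forall v : 'cV[C]_d, 0 <= (cadj v *m A *m v) 0 0.
Definition posdef (A : M) : Prop :=
  hermitian A /\ forall v : 'cV[C]_d, v != 0 -> 0 < (cadj v *m A *m v) 0 0.

(* the positive semidefinite square root: a (the unique, when A is psd)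
   psd matrix S with S * S = A, chosen by classical choice *)
Definition sqrtm (A : M) : M :=
  epsilon (inhabits (0 : M)) (fun S : M => psd S /\ S *m S = A).

Definition gmean (A B : M) : M :=
  let rA := sqrtm A in let irA := invmx rA in
  rA *m sqrtm (irA *m B *m irA) *m rA.

Definition genFid (Rm P Q : M) : C :=
  let rR := sqrtm Rm in
  \tr (sqrtm (rR *m P *m rR) *m invmx Rm *m sqrtm (rR *m Q *m rR)).

Definition matsFid (P Q : M) : C := \tr (gmean P Q).

End MatrixDefs.

(* Main.v *)
Require Import Defs.
From Stdlib Require Import ClassicalEpsilon.
From mathcomp Require Import all_boot all_order all_algebra.
From mathcomp Require Import reals complex ring.
Set Implicit Arguments. Unset Strict Implicit. Unset Printing Implicit Defensive.
Import Order.TTheory GRing.Theory Num.Theory.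
Local Open Scope ring_scope.
Local Open Scope sesquilinear_scope.

Section Aux.
Variables (R : realType) (d : nat).
Local Notation C := (R[i]).
Local Notation M := ('M[C]_d).
Local Notation qf A v := ((v ^t* *m A *m v) 0 0).

Lemma adjE (A : M) : adjmx A = A ^t*.
Proof. by rewrite /adjmx map_trmx. Qed.
Lemma cadjE (v : 'cV[C]_d) : cadj v = v ^t*.
Proof. by rewrite /cadj map_trmx. Qed.

Lemma trCM m n p (A : 'M[C]_(m, n)) (B : 'M[C]_(n, p)) : (A *m B) ^t* = B ^t* *m A ^t*.
Proof. by rewrite trmx_mul map_mxM. Qed.

Lemma herm (A : M) : Defs.hermitian A <-> A ^t* = A.
Proof. by rewrite /Defs.hermitian adjE. Qed.

Lemma psdE (A : M) : psd A <-> (A ^t* = A /\ forall v : 'cV[C]_d, 0 <= qf A v).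
Proof.
rewrite /Defs.psd /Defs.hermitian adjE.
split=> -[h1 h2]; (split; [exact: h1| move=> v; have := h2 v; rewrite cadjE; exact]).
Qed.

Lemma posdefE (A : M) : posdef A <-> (A ^t* = A /\ forall v : 'cV[C]_d, v != 0 -> 0 < qf A v).
Proof.
rewrite /Defs.posdef /Defs.hermitian adjE.
split=> -[h1 h2]; (split; [exact: h1| move=> v; have := h2 v; rewrite cadjE; exact]).
Qed.

Lemma psd_congr (B Cm : M) : psd B -> psd (Cm ^t* *m B *m Cm).
Proof.
move/psdE=> [hB pB]; apply/psdE; split.
  by rewrite !trCM trmxCK hB mulmxA.
move=> v; have := pB (Cm *m v); by rewrite trCM !mulmxA.
Qed.

Lemma posdef_psd (A : M) : posdef A -> psd A.
Proof.
move/posdefE=> [h p]; apply/psdE; split=> // v.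
have [->|v0] := eqVneq v 0; last exact: ltW (p v v0).
by rewrite mulmx0 mxE.
Qed.

Lemma posdef_unit (A : M) : posdef A -> A \in unitmx.
Proof.
move/posdefE=> [h p]; rewrite unitmxE unitfE; apply/negP=> /eqP.
rewrite -det_tr => /eqP /det0P [w w0 wA].
have v0 : w^T != 0 by rewrite trmx_eq0.
have := p _ v0; rewrite -mulmxA.
have -> : A *m w^T = 0 by apply: trmx_inj; rewrite trmx_mul trmxK wA trmx0.
by rewrite mulmx0 mxE ltxx.
Qed.

Lemma invmxM (A B : M) : A \in unitmx -> B \in unitmx ->
  invmx (A *m B) = invmx B *m invmx A.
Proof.
move=> uA uB; have uAB : A *m B \in unitmx by rewrite unitmx_mul uA.
have h : (invmx B *m invmx A) *m (A *m B) = 1%:M.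
  by rewrite mulmxA -(mulmxA _ (invmx A)) (mulVmx uA) mulmx1 (mulVmx uB).
by rewrite -[LHS]mul1mx -h -mulmxA (mulmxV uAB) mulmx1.
Qed.

Lemma trC_inv (A : M) : (invmx A) ^t* = invmx (A ^t*).
Proof. by rewrite trmx_inv map_invmx. Qed.

Lemma herm_inv (A : M) : A ^t* = A -> (invmx A) ^t* = invmx A.
Proof. by move=> h; rewrite trC_inv h. Qed.

Lemma unitmx_sq (A : M) : A *m A \in unitmx -> A \in unitmx.
Proof. by rewrite unitmx_mul => /andP[]. Qed.

Lemma mx_eq0_vec m (B : 'M[C]_(m, d)) : (forall v : 'cV[C]_d, B *m v = 0) -> B = 0.
Proof.
move=> h; apply/matrixP=> i j.
have := h (delta_mx j 0); rewrite -colE => /matrixP /(_ i 0).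
by rewrite !mxE.
Qed.

Lemma herm_sq0 (H : M) : H ^t* = H -> H *m H = 0 -> H = 0.
Proof.
move=> hH /matrixP hHH; apply/matrixP=> i j; rewrite mxE.
have := hHH i i; rewrite !mxE => hs.
have e : forall k, H k i = (H i k)^*.
  by move=> k; rewrite -{1}hH !mxE.
have : \sum_k H i k * (H i k)^* = 0 by rewrite -[RHS]hs; apply: eq_bigr => k _; rewrite e.
move/psumr_eq0P => /(_ (fun k _ => mul_conjC_ge0 _) j isT) /eqP.
by rewrite mul_conjC_eq0 => /eqP.
Qed.

Lemma qdiag (s : 'rV[C]_d) (y : 'cV[C]_d) :
  qf (diag_mx s) y = \sum_i s 0 i * ((y i 0) * (y i 0)^*).
Proof.
rewrite mul_mx_diag mxE; apply: eq_bigr => i _; rewrite !mxE.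
ring.
Qed.

Lemma unitary_l (U : M) : U \is unitarymx -> U *m U ^t* = 1%:M.
Proof. by move/unitarymxP. Qed.
Lemma unitary_r (U : M) : U \is unitarymx -> U ^t* *m U = 1%:M.
Proof. by move=> hU; rewrite -[U ^t*]mul1mx mulmxKtV. Qed.


Lemma trCB (A B : M) : (A - B) ^t* = A ^t* - B ^t*.
Proof. by rewrite linearB /= map_mxB. Qed.

Lemma spectral_psd (A : M) : psd A -> exists U (s : 'rV[C]_d),
  [/\ U \is unitarymx, forall i, 0 <= s 0 i & A = U ^t* *m diag_mx s *m U].
Proof.
case/psdE=> hh hp.
have hn : A \is normalmx by apply/normalmxP; rewrite hh.
have hU : spectralmx A \is unitarymx := spectral_unitarymx A.
have eA : A = (spectralmx A) ^t* *m diag_mx (spectral_diag A) *m spectralmx A.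
  rewrite -(invmx_unitary hU); exact/orthomx_spectralP.
move: (spectralmx A) (spectral_diag A) hU eA => U s hU eA.
exists U, s; split; [exact: hU| |exact: eA].
move=> i; have := hp (U ^t* *m (delta_mx i 0 : 'cV[C]_d)).
have -> : (U ^t* *m (delta_mx i 0 : 'cV[C]_d)) ^t* *m A *m
    (U ^t* *m (delta_mx i 0 : 'cV[C]_d)) =
    ((delta_mx i 0 : 'cV[C]_d)) ^t* *m diag_mx s *m (delta_mx i 0 : 'cV[C]_d).
  by rewrite trCM trmxCK eA !mulmxA !mulmxtVK.
rewrite qdiag (bigD1 i) ?inE //= big1 => [|j ji].
  by rewrite !mxE eqxx /= conjC1 !mulr1 addr0.
by rewrite !mxE (negbTE ji) /= !mul0r mulr0.
Qed.

Lemma psd_diag (g : 'rV[C]_d) : (forall i, 0 <= g 0 i) -> psd (diag_mx g).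
Proof.
move=> hg; apply/psdE; split.
  rewrite tr_diag_mx map_diag_mx; congr diag_mx; apply/rowP => j.
  rewrite !mxE; exact: geC0_conj (hg j).
move=> v; rewrite qdiag; apply: sumr_ge0 => i _.
exact: mulr_ge0 (hg i) (mul_conjC_ge0 _).
Qed.

Lemma psd_spec (U : M) (g : 'rV[C]_d) : (forall i, 0 <= g 0 i) ->
  psd (U ^t* *m diag_mx g *m U).
Proof. by move=> hg; apply: psd_congr; apply: psd_diag. Qed.

Lemma spec_sq (U : M) (g : 'rV[C]_d) : U \is unitarymx ->
  (U ^t* *m diag_mx g *m U) *m (U ^t* *m diag_mx g *m U) =
  U ^t* *m diag_mx (\row_j (g 0 j * g 0 j)) *m U.
Proof.
move=> hU; rewrite !mulmxA (mulmxtVK _ hU).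
by rewrite -(mulmxA (U ^t*) (diag_mx g) (diag_mx g)) mulmx_diag.
Qed.

Lemma sqrt_exists (A : M) : psd A -> exists S, psd S /\ S *m S = A.
Proof.
move=> hA; have [U [s [hU hs eA]]] := spectral_psd hA.
exists (U ^t* *m diag_mx (\row_j sqrtC (s 0 j)) *m U); split.
  by apply: psd_spec => i; rewrite mxE sqrtC_ge0.
rewrite (spec_sq _ hU) [RHS]eA; apply: (congr1 (fun g => U ^t* *m diag_mx g *m U)); apply/rowP => j.
by rewrite !mxE -expr2 sqrtCK.
Qed.

Lemma comm_spec (U : M) (s g : 'rV[C]_d) (B : M) : U \is unitarymx ->
  (forall i j, s 0 i = s 0 j -> g 0 i = g 0 j) ->
  B *m (U ^t* *m diag_mx s *m U) = (U ^t* *m diag_mx s *m U) *m B ->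
  B *m (U ^t* *m diag_mx g *m U) = (U ^t* *m diag_mx g *m U) *m B.
Proof.
move=> hU hg hB.
pose B' := U *m B *m U ^t*.
have eB : B = U ^t* *m B' *m U.
  by rewrite /B' !mulmxA (unitary_r hU) mul1mx mulmxKtV.
have hD : B' *m diag_mx s = diag_mx s *m B'.
  have := congr1 (fun Z => U *m Z *m U ^t*) hB.
  rewrite /B' /= !mulmxA (unitary_l hU) mul1mx !(mulmxtVK _ hU).
  by apply.
clearbody B'.
have hE : forall i j, B' i j * s 0 j = s 0 i * B' i j.
  by move=> i j; have := congr1 (fun Z : M => Z i j) hD; rewrite mul_mx_diag mul_diag_mx !mxE.
have hG : B' *m diag_mx g = diag_mx g *m B'.
  apply/matrixP => i j; rewrite mul_mx_diag mul_diag_mx !mxE.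
  have [e|ne] := eqVneq (s 0 i) (s 0 j).
    by rewrite (hg _ _ e) mulrC.
  have -> : B' i j = 0.
    have h0 : B' i j * (s 0 j - s 0 i) = 0.
      by rewrite mulrBr hE [s 0 i * _]mulrC subrr.
    move/eqP: h0; rewrite mulf_eq0 => /orP [/eqP h|]; first exact: h.
    by rewrite subr_eq0 eq_sym (negbTE ne).
  by rewrite mul0r mulr0.
rewrite eB !mulmxA !(mulmxtVK _ hU).
by rewrite -(mulmxA (U ^t*) B') hG mulmxA.
Qed.

Lemma psd_ker (A : M) (w : 'cV[C]_d) : psd A -> (w ^t* *m A *m w) 0 0 = 0 -> A *m w = 0.
Proof.
move=> hA; have [U [s [hU hs eA]]] := spectral_psd hA.
have e : (w ^t* *m A *m w) 0 0 = (((U *m w) ^t* *m diag_mx s *m (U *m w)) 0 0).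
  by rewrite eA trCM !mulmxA.
rewrite e qdiag => h0.
have hDy : diag_mx s *m (U *m w) = 0.
  apply/matrixP => i j; rewrite mul_diag_mx [LHS]mxE [RHS]mxE (ord1 j).
  have := psumr_eq0P (fun k _ => mulr_ge0 (hs k) (mul_conjC_ge0 _)) h0 (i := i) isT.
  move/eqP; rewrite mulf_eq0 mul_conjC_eq0 => /orP [/eqP->|/eqP->].
    by rewrite mul0r.
  by rewrite mulr0.
by rewrite eA -!mulmxA hDy mulmx0.
Qed.

Lemma sqrt_uniq (S T : M) : psd S -> psd T -> S *m S = T *m T -> S = T.
Proof.
move=> hS hT hST.
have [U [s [hU hs eS]]] := spectral_psd hS.
have hcomm : T *m S = S *m T.
  have h1 : T *m (U ^t* *m diag_mx (\row_j (s 0 j * s 0 j)) *m U) =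
      (U ^t* *m diag_mx (\row_j (s 0 j * s 0 j)) *m U) *m T.
    by rewrite -(spec_sq _ hU) -eS hST mulmxA.
  have := comm_spec (g := s) hU _ h1; rewrite -eS; apply.
  move=> i j; rewrite !mxE => e; apply/eqP.
  by rewrite -(@eqrXn2 _ 2 _ _ isT (hs i) (hs j)) !expr2 e.
have hK : (S + T) *m (S - T) = 0.
  by rewrite mulmxDl !mulmxBr hST hcomm addrA subrK subrr.
have hHH : (S - T) *m (S - T) = 0.
  apply: mx_eq0_vec => v.
  pose w := (S - T) *m v.
  have hq : (w ^t* *m (S + T) *m w) 0 0 = 0.
    by rewrite /w -mulmxA (mulmxA (S + T)) hK mul0mx mulmx0 mxE.
  have [pS pT] : (w ^t* *m S *m w) 0 0 = 0 /\ (w ^t* *m T *m w) 0 0 = 0.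
    move: hq; rewrite mulmxDr mulmxDl mxE => /eqP.
    case/psdE: hS => _ hS'; case/psdE: hT => _ hT'.
    rewrite paddr_eq0 ?hS' ?hT' // => /andP [/eqP a /eqP b]; split; [exact: a|exact: b].
  by rewrite -mulmxA mulmxBl (psd_ker hS pS) (psd_ker hT pT) subrr.
apply/eqP; rewrite -subr_eq0; apply/eqP; apply: herm_sq0 hHH.
case/psdE: hS => hS' _; case/psdE: hT => hT' _.
by rewrite trCB hS' hT'.
Qed.

Lemma psd1 : psd (1%:M : M).
Proof.
have -> : (1%:M : M) = diag_mx (const_mx 1).
  by apply/matrixP => i j; rewrite !mxE.
by apply: psd_diag => i; rewrite mxE ler01.
Qed.

Lemma sqrtm_spec (A : M) : psd A -> psd (sqrtm A) /\ sqrtm A *m sqrtm A = A.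
Proof.
move=> hA; rewrite /sqrtm.
exact: (epsilon_spec (inhabits (0 : M)) (fun S : M => psd S /\ S *m S = A) (sqrt_exists hA)).
Qed.

Lemma psd_sq (S : M) : psd S -> psd (S *m S).
Proof.
move=> hS; have h := psd_congr S psd1; case/psdE: (hS) => hh _.
by move: h; rewrite hh mulmx1.
Qed.

Lemma sqrtmE (A S : M) : psd S -> S *m S = A -> sqrtm A = S.
Proof.
move=> hS eA; have hA : psd A by rewrite -eA; apply: psd_sq.
have [h1 h2] := sqrtm_spec hA.
by apply: sqrt_uniq => //; rewrite h2.
Qed.

Lemma comm_sqrtm (X B : M) : psd X -> B *m X = X *m B ->
  B *m sqrtm X = sqrtm X *m B.
Proof.
move=> hX hB; have [U [s [hU hs eX]]] := spectral_psd hX.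
have -> : sqrtm X = U ^t* *m diag_mx (\row_j sqrtC (s 0 j)) *m U.
  apply: sqrtmE; first by apply: psd_spec => i; rewrite mxE sqrtC_ge0.
  rewrite (spec_sq _ hU) [RHS]eX; apply: (congr1 (fun g => U ^t* *m diag_mx g *m U)); apply/rowP => j.
  by rewrite !mxE -expr2 sqrtCK.
apply: (comm_spec (s := s) hU); first by move=> i j; rewrite !mxE => ->.
by rewrite -eX.
Qed.


Lemma trCZD (a b : C) (A B : M) :
  (a *: A + b *: B) ^t* = a^* *: A ^t* + b^* *: B ^t*.
Proof. by rewrite linearD !linearZ /= map_mxD !map_mxZ. Qed.

Lemma qfL (a b : C) (A B : M) (v : 'cV[C]_d) :
  qf (a *: A + b *: B) v = a * qf A v + b * qf B v.
Proof. by rewrite mulmxDr -!scalemxAr mulmxDl -!scalemxAl !mxE. Qed.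

Lemma invmx2 (A : M) : A \in unitmx -> invmx (A *m A) = invmx A *m invmx A.
Proof. by move=> uA; rewrite invmxM. Qed.

Lemma psd_herm (A : M) : psd A -> A ^t* = A.
Proof. by case/psdE. Qed.

End Aux.

Unset Implicit Arguments.
Close Scope sesquilinear_scope.
Local Open Scope sesquilinear_scope.
Theorem mainTheorem12 (R : realType) (d : nat) (P Q : 'M[R[i]]_d) (t : R) :
  posdef P -> posdef Q -> 0 <= t <= 1 ->
  genFid (invmx ((1 - (t%:C)%C) *: P + (t%:C)%C *: Q)) P Q = matsFid P Q.
Proof.
move=> hP hQ /andP[t0 t1].
rewrite /genFid /matsFid /gmean.
set tc := (t%:C)%C.
set Mm := (1 - tc) *: P + tc *: Q.
have pP := posdef_psd hP; have pQ := posdef_psd hQ.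
have uP := posdef_unit hP; have uQ := posdef_unit hQ.
have hPh := psd_herm pP; have hQh := psd_herm pQ.
have tc0 : 0 <= tc by rewrite lecR.
have tc1 : 0 <= 1 - tc by rewrite subr_ge0 lecR.
have hM : posdef Mm.
  apply/posdefE; split.
    by rewrite trCZD hPh hQh geC0_conj // geC0_conj.
  move=> v v0; rewrite qfL.
  case/posdefE: hP => _ /(_ v v0) qP; case/posdefE: hQ => _ /(_ v v0) qQ.
  have [->|tn0] := eqVneq tc 0.
    by rewrite subr0 mul1r mul0r addr0.
  have tcp : 0 < tc by rewrite lt_def tn0 tc0.
  exact: ltr_wpDl (mulr_ge0 tc1 (ltW qP)) (mulr_gt0 tcp qQ).
have uM := posdef_unit hM.
have hMh := psd_herm (posdef_psd hM).
rewrite invmxK.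
set Rm := invmx Mm.
have hRh : Rm ^t* = Rm := herm_inv hMh.
have pR : psd Rm.
  have := psd_congr Rm (posdef_psd hM).
  by rewrite hRh /Rm (mulVmx uM) mul1mx.
set r := sqrtm Rm.
have [pr err] : psd r /\ r *m r = Rm := sqrtm_spec pR.
have hrh := psd_herm pr.
have ur : r \in unitmx by apply: unitmx_sq; rewrite err unitmx_inv.
have eM : Mm = invmx r *m invmx r by rewrite -(invmx2 ur) err /Rm invmxK.
set X := r *m P *m r.
set Y := r *m Q *m r.
have pX : psd X by have := psd_congr r pP; rewrite hrh.
have pY : psd Y by have := psd_congr r pQ; rewrite hrh.
have hXY : (1 - tc) *: X + tc *: Y = 1%:M.
  have -> : (1 - tc) *: X + tc *: Y = r *m Mm *m r.
    by rewrite /X /Y /Mm mulmxDr mulmxDl -!scalemxAr -!scalemxAl.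
  by rewrite eM mulmxA (mulmxV ur) mul1mx (mulVmx ur).
have cXY : X *m Y = Y *m X.
  have [e|tn0] := eqVneq tc 0.
    have eX : X = 1%:M by move: hXY; rewrite e subr0 scale1r scale0r addr0.
    by rewrite eX mul1mx mulmx1.
  apply: (scalerI tn0).
  have h : X *m ((1 - tc) *: X + tc *: Y) = ((1 - tc) *: X + tc *: Y) *m X.
    by rewrite hXY mulmx1 mul1mx.
  move: h; rewrite mulmxDr mulmxDl -!scalemxAr -!scalemxAl => /addrI h.
  exact: h.
set sX := sqrtm X.
have [psX esX] : psd sX /\ sX *m sX = X := sqrtm_spec pX.
set sY := sqrtm Y.
have [psY esY] : psd sY /\ sY *m sY = Y := sqrtm_spec pY.
have c1 : Y *m sX = sX *m Y := comm_sqrtm pX (esym cXY).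
have c2 : sX *m sY = sY *m sX := comm_sqrtm pY (esym c1).
set q' := sqrtm sX.
have [pq eq] : psd q' /\ q' *m q' = sX := sqrtm_spec psX.
have c3 : sY *m q' = q' *m sY := comm_sqrtm psX (esym c2).
have eL : \tr (sX *m Mm *m sY) = \tr (sX *m sY *m Mm).
  by rewrite mxtrace_mulC mulmxA -c2.
rewrite eL.
set p := sqrtm P.
have [pp epp] : psd p /\ p *m p = P := sqrtm_spec pP.
have hph := psd_herm pp.
have up : p \in unitmx by apply: unitmx_sq; rewrite epp.
set ip := invmx p.
set G := sqrtm (ip *m Q *m ip).
set Z := invmx r *m (sX *m sY) *m invmx r.
set W := ip *m Z *m ip.
have usX : sX \in unitmx.
  by apply: unitmx_sq; rewrite esX /X !unitmx_mul ur uP.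
have e1 : ip *m ip = invmx P by rewrite -(invmx2 up) epp.
have e2 : invmx r *m invmx P *m invmx r = invmx X.
  have urP : r *m P \in unitmx by rewrite unitmx_mul ur uP.
  by rewrite /X (invmxM urP ur) (invmxM ur uP) mulmxA.
have e3 : invmx X = invmx sX *m invmx sX by rewrite -esX (invmx2 usX).
have e4 : (sX *m sY) *m (invmx sX *m invmx sX) *m (sX *m sY) = Y.
  by rewrite !mulmxA (mulmxKV usX) c2 (mulmxK usX) esY.
have eZ : Z *m invmx P *m Z = Q.
  have -> : Z *m invmx P *m Z =
      invmx r *m ((sX *m sY) *m (invmx r *m invmx P *m invmx r) *m (sX *m sY)) *m invmx r.
    by rewrite /Z !mulmxA.
  by rewrite e2 e3 e4 /Y !mulmxA (mulVmx ur) mul1mx (mulmxK ur).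
have eG : G = W.
  apply: sqrtmE.
    have eW : W = (q' *m invmx r *m ip) ^t* *m sY *m (q' *m invmx r *m ip).
      rewrite !trCM (herm_inv hph) (herm_inv hrh) (psd_herm pq).
      by rewrite /W /Z -eq -(mulmxA q') -c3 !mulmxA.
    rewrite eW; apply: psd_congr; exact: psY.
  have -> : W *m W = ip *m (Z *m (ip *m ip) *m Z) *m ip by rewrite /W !mulmxA.
  by rewrite e1 eZ.
rewrite eG.
have eR : \tr (p *m W *m p) = \tr (sX *m sY *m Mm).
  have -> : p *m W *m p = Z.
    by rewrite /W !mulmxA (mulmxV up) mul1mx (mulmxKV up) /Z !mulmxA.
  rewrite /Z mxtrace_mulC mulmxA -eM; exact: mxtrace_mulC.
by rewrite eR.
Qed.
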